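(* Let $\tau_0\in(0,1)$, $\bar\beta>0$, and define $\tau_{k+1}:=\frac{\tau_k}{2}\big[\sqrt{\tau_k^2+4}-\tau_k\big]$ for $k\ge0$. Let $\beta_1^0=\beta_2^0:=\bar\beta$ and for $k\ge0$ set $\beta_1^{k+1}:=(1-\tau_k)\beta_1^k$, $\beta_2^{k+1}:=\beta_2^k$ if $k$ is even, and $\beta_1^{k+1}:=\beta_1^k$, $\beta_2^{k+1}:=(1-\tau_k)\beta_2^k$ if $k$ is odd. Then for all $k\ge1$, $$\frac{(1-\tau_0)\bar\beta}{2\tau_0k+1}<\beta_1^k<\frac{2\bar\beta\sqrt{1-\tau_0}}{\tau_0k},\qquad \frac{\bar\beta\sqrt{1-\tau_0}}{2\tau_0k+1}<\beta_2^k<\frac{2\bar\beta}{\tau_0k}.$$ *)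

(* Defs.v *)
From Stdlib Require Import Reals Lra.
Open Scope R_scope.

Fixpoint tau (tau0 : R) (k : nat) : R :=
  match k with
  | O => tau0
  | S k' => let t := tau tau0 k' in t / 2 * (sqrt (t ^ 2 + 4) - t)
  end.

Fixpoint beta (tau0 betabar : R) (k : nat) : R * R :=
  match k with
  | O => (betabar, betabar)
  | S k' =>
      let b := beta tau0 betabar k' in
      let t := tau tau0 k' in
      if Nat.even k' then ((1 - t) * fst b, snd b)
      else (fst b, (1 - t) * snd b)
  end.

Definition beta1 tau0 betabar k := fst (beta tau0 betabar k).
Definition beta2 tau0 betabar k := snd (beta tau0 betabar k).

(* Main.v *)
Require Import Defs.
From Stdlib Require Import Reals Lra Lia.
Open Scope R_scope.

Lemma step_facts t : 0 < t < 1 ->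
  let t' := t / 2 * (sqrt (t ^ 2 + 4) - t) in
  0 < t' < t /\ t' ^ 2 = (1 - t') * t ^ 2.
Proof.
  intros Ht t'.
  pose (s := sqrt (t ^ 2 + 4)).
  assert (Hs2 : s * s = t ^ 2 + 4) by (apply sqrt_sqrt; nra).
  assert (Hs0 : 0 <= s) by apply sqrt_pos.
  assert (Hst : t < s) by nra.
  assert (Hs3 : s < t + 2) by nra.
  unfold t'; fold s.
  split; [split|].
  - apply Rmult_lt_0_compat; lra.
  - nra.
  - replace ((1 - t / 2 * (s - t)) * t ^ 2) with (t^2 - t^3*(s-t)/2) by field.
    replace ((t / 2 * (s - t)) ^ 2) with (t^2*(s*s - 2*s*t + t*t)/4) by field.
    rewrite Hs2. field.
Qed.

Lemma tau_bounds t0 : 0 < t0 < 1 -> forall k, 0 < tau t0 k < 1.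
Proof.
  intros H k; induction k; cbn [tau]; auto; cbv zeta.
  destruct (step_facts _ IHk) as [[A B] _]. lra.
Qed.

Lemma tau_dec t0 : 0 < t0 < 1 -> forall k, tau t0 (S k) < tau t0 k.
Proof.
  intros H k. cbn [tau]; cbv zeta. destruct (step_facts _ (tau_bounds t0 H k)) as [[A B] _]. lra.
Qed.

Lemma tau_sq t0 : 0 < t0 < 1 -> forall k,
  tau t0 (S k) ^ 2 = (1 - tau t0 (S k)) * tau t0 k ^ 2.
Proof.
  intros H k. cbn [tau]; cbv zeta. destruct (step_facts _ (tau_bounds t0 H k)) as [_ E]. exact E.
Qed.

Lemma inv_step t t' : 0 < t' < t -> t' ^ 2 = (1 - t') * t ^ 2 ->
  / t + / 2 <= / t' <= / t + 1.
Proof.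
  intros [H1 H2] E.
  assert (E2 : (t - t') * (t + t') = t' * t ^ 2) by nra.
  assert (A : t - t' <= t * t') by nra.
  assert (B : t * t' / 2 <= t - t') by nra.
  assert (D : / t' = / t + (t - t') / (t * t')) by (field; lra).
  rewrite D.
  assert (P : 0 < t * t') by nra.
  split.
  - apply Rplus_le_compat_l.
    apply (Rmult_le_reg_r (t * t')); auto.
    unfold Rdiv. rewrite Rmult_assoc, Rinv_l by lra. lra.
  - apply Rplus_le_compat_l.
    apply (Rmult_le_reg_r (t * t')); auto.
    unfold Rdiv. rewrite Rmult_assoc, Rinv_l by lra. lra.
Qed.

Lemma inv_bounds t0 : 0 < t0 < 1 -> forall k,
  / t0 + INR k / 2 <= / tau t0 k <= / t0 + INR k.
Proof.
  intros H k; induction k.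
  - simpl. lra.
  - rewrite S_INR.
    destruct (inv_step (tau t0 k) (tau t0 (S k))) as [A B].
    + pose proof (tau_bounds t0 H (S k)); pose proof (tau_dec t0 H k); lra.
    + apply tau_sq; auto.
    + lra.
Qed.

Lemma even_S k : Nat.even (S k) = negb (Nat.even k).
Proof. rewrite Nat.even_succ, <- Nat.negb_even. reflexivity. Qed.

Lemma beta_pos t0 bb : 0 < t0 < 1 -> 0 < bb -> forall k,
  0 < beta1 t0 bb k /\ 0 < beta2 t0 bb k.
Proof.
  intros H Hb k; induction k; unfold beta1, beta2 in *; simpl; auto.
  pose proof (tau_bounds t0 H k).
  destruct (Nat.even k); simpl; split; nra.
Qed.

Lemma beta_prod t0 bb : 0 < t0 < 1 -> 0 < bb -> forall k,
  beta1 t0 bb (S k) * beta2 t0 bb (S k) * t0 ^ 2 = bb ^ 2 * (1 - t0) * tau t0 k ^ 2.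
Proof.
  intros H Hb k; induction k.
  - unfold beta1, beta2; simpl. ring.
  - unfold beta1, beta2 in *. remember (S k) as n.
    simpl (beta t0 bb (S n)).
    pose proof (tau_sq t0 H k). rewrite <- Heqn in H0.
    destruct (Nat.even n); cbn [fst snd].
    + replace ((1 - tau t0 n) * fst (beta t0 bb n) * snd (beta t0 bb n) * t0 ^ 2)
        with ((1 - tau t0 n) * (fst (beta t0 bb n) * snd (beta t0 bb n) * t0 ^ 2)) by ring.
      rewrite IHk, H0. ring.
    + replace (fst (beta t0 bb n) * ((1 - tau t0 n) * snd (beta t0 bb n)) * t0 ^ 2)
        with ((1 - tau t0 n) * (fst (beta t0 bb n) * snd (beta t0 bb n) * t0 ^ 2)) by ring.
      rewrite IHk, H0. ring.
Qed.

Lemma beta_inv t0 bb : 0 < t0 < 1 -> 0 < bb -> forall k,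
  let b1 := beta1 t0 bb k in let b2 := beta2 t0 bb k in
  if Nat.even k then (b1 <= b2 /\ (1 - t0) * b2 <= (1 - tau t0 k) * b1)
  else (b1 <= (1 - tau t0 (Nat.pred k)) * b2 /\ (1 - t0) * b2 <= b1).
Proof.
  intros H Hb k; induction k; intros b1 b2.
  - unfold b1, b2, beta1, beta2; simpl. lra.
  - subst b1 b2. rewrite even_S. simpl Nat.pred.
    pose proof (beta_pos t0 bb H Hb k) as [P1 P2].
    pose proof (tau_bounds t0 H k). pose proof (tau_bounds t0 H (S k)).
    pose proof (tau_dec t0 H k).
    unfold beta1, beta2 in *. simpl (beta t0 bb (S k)).
    destruct (Nat.even k); simpl in *.
    + split; nra.
    + destruct k as [|k'].
      * simpl in *. split; nra.
      * simpl Nat.pred in IHk. pose proof (tau_dec t0 H k'). split; nra.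
Qed.

Lemma div_lt_l A D b : 0 < D -> A < b * D -> A / D < b.
Proof. intros HD H. apply (Rmult_lt_reg_r D); auto. unfold Rdiv. rewrite Rmult_assoc, Rinv_l by lra. lra. Qed.
Lemma div_lt_r A D b : 0 < D -> b * D < A -> b < A / D.
Proof. intros HD H. apply (Rmult_lt_reg_r D); auto. unfold Rdiv. rewrite Rmult_assoc, Rinv_l by lra. lra. Qed.

Lemma sq_le x y : 0 <= x -> 0 <= y -> x * x <= y * y -> x <= y.
Proof. intros. nra. Qed.

Theorem lemma7 (tau0 betabar : R) (htau : 0 < tau0 < 1) (hb : 0 < betabar) :
  forall k : nat, (1 <= k)%nat ->
    (1 - tau0) * betabar / (2 * tau0 * INR k + 1) < beta1 tau0 betabar k /\
    beta1 tau0 betabar k < 2 * betabar * sqrt (1 - tau0) / (tau0 * INR k) /\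
    betabar * sqrt (1 - tau0) / (2 * tau0 * INR k + 1) < beta2 tau0 betabar k /\
    beta2 tau0 betabar k < 2 * betabar / (tau0 * INR k).
Proof.
  intros k Hk. destruct k as [|n]; [lia|].
  pose proof (beta_inv tau0 betabar htau hb (S n)) as Inv. cbv zeta in Inv.
  pose proof (beta_prod tau0 betabar htau hb n) as Pr.
  pose proof (beta_pos tau0 betabar htau hb (S n)) as [P1 P2].
  pose proof (tau_bounds tau0 htau n) as Tn.
  pose proof (tau_bounds tau0 htau (S n)) as TSn.
  pose proof (tau_dec tau0 htau n) as Td.
  pose proof (inv_bounds tau0 htau n) as [I1 I2].
  set (b1 := beta1 tau0 betabar (S n)) in *.
  set (b2 := beta2 tau0 betabar (S n)) in *.
  set (t := tau tau0 n) in *.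
  assert (R1 : b1 <= b2 /\ (1 - tau0) * b2 <= b1).
  { destruct (Nat.even (S n)); simpl Nat.pred in Inv; destruct Inv as [X Y]; split; try lra. { assert (0 <= tau tau0 (S n) * b1) by nra. nra. } { change (tau tau0 n) with t in X. assert (0 <= t * b2) by nra. nra. } }
  destruct R1 as [R1 R2].
  assert (Hn : 0 <= INR n) by apply pos_INR.
  rewrite S_INR.
  set (K := INR n + 1).
  assert (HK : 1 <= K) by (unfold K; lra).
  assert (J1 : tau0 <= t * (1 + tau0 * INR n)).
  { assert (E : t * (1 + tau0 * INR n) = tau0 * t * (/ tau0 + INR n)) by (field; lra).
    rewrite E. assert (E2 : tau0 = tau0 * t * / t) by (field; lra).
    rewrite E2 at 1. apply Rmult_le_compat_l; nra. }
  assert (J2 : t * (2 + tau0 * INR n) <= 2 * tau0).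
  { assert (E : t * (2 + tau0 * INR n) = 2 * tau0 * t * (/ tau0 + INR n / 2)) by (field; lra).
    rewrite E. assert (E2 : 2 * tau0 = 2 * tau0 * t * / t) by (field; lra).
    rewrite E2 at 2. apply Rmult_le_compat_l; nra. }
  assert (tK : t * K < 2) by (unfold K; nra).
  set (s := sqrt (1 - tau0)).
  assert (Hs : s * s = 1 - tau0) by (apply sqrt_sqrt; lra).
  assert (Hs0 : 0 < s) by (apply sqrt_lt_R0; lra).
  assert (Pr' : (b1 * tau0) * (b2 * tau0) = (betabar * s * t) * (betabar * s * t)).
  { replace ((betabar * s * t) * (betabar * s * t)) with (betabar ^ 2 * (s * s) * t ^ 2) by ring.
    rewrite Hs, <- Pr. ring. }
  assert (Q0 : 0 < tau0 * tau0) by nra.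
  assert (Q1 : 0 < betabar * s * t) by (apply Rmult_lt_0_compat; [apply Rmult_lt_0_compat | idtac]; lra).
  assert (B1u : b1 * tau0 <= betabar * s * t).
  { apply sq_le; [nra | nra | idtac]. rewrite <- Pr'.
    assert (b1 * (tau0 * tau0) * b1 <= b1 * (tau0 * tau0) * b2) by (apply Rmult_le_compat_l; nra). nra. }
  assert (B2l : betabar * s * t <= b2 * tau0).
  { apply sq_le; [nra | nra | idtac]. rewrite <- Pr'.
    assert (b2 * (tau0 * tau0) * b1 <= b2 * (tau0 * tau0) * b2) by (apply Rmult_le_compat_l; nra). nra. }
  assert (B1l : betabar * (1 - tau0) * t <= b1 * tau0).
  { apply sq_le; [nra | nra | idtac].
    replace (betabar * (1 - tau0) * t * (betabar * (1 - tau0) * t))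
      with ((1 - tau0) * ((betabar * s * t) * (betabar * s * t))) by (rewrite <- Hs; ring).
    rewrite <- Pr'. nra. }
  assert (B2u : b2 * tau0 <= betabar * t).
  { apply sq_le; [nra | nra | idtac].
    apply (Rmult_le_reg_l (1 - tau0)); [lra|].
    replace ((1 - tau0) * (betabar * t * (betabar * t)))
      with ((betabar * s * t) * (betabar * s * t)) by (rewrite <- Hs; ring).
    rewrite <- Pr'. nra. }
  assert (DK : 0 < 2 * tau0 * K + 1) by nra.
  assert (DK2 : 0 < tau0 * K) by nra.
  repeat split.
  - apply div_lt_l; auto.
    apply (Rmult_lt_reg_l tau0); [lra|].
    assert (X1 : t * (1 + tau0 * INR n) < t * (2 * tau0 * K + 1)) by (unfold K; nra).
    assert (C : 0 < betabar * (1 - tau0)) by nra.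
    assert (X2 : betabar * (1 - tau0) * tau0 <= betabar * (1 - tau0) * (t * (1 + tau0 * INR n))) by (apply Rmult_le_compat_l; lra).
    assert (X3 : betabar * (1 - tau0) * (t * (1 + tau0 * INR n)) < betabar * (1 - tau0) * (t * (2 * tau0 * K + 1))) by (apply Rmult_lt_compat_l; lra).
    assert (X4 : betabar * (1 - tau0) * t * (2 * tau0 * K + 1) <= b1 * tau0 * (2 * tau0 * K + 1)) by (apply Rmult_le_compat_r; lra).
    nra.
  - apply div_lt_r; auto.
    assert (b1 * tau0 * K <= betabar * s * t * K) by nra. nra.
  - apply div_lt_l; auto.
    apply (Rmult_lt_reg_l tau0); [lra|].
    assert (X1 : t * (1 + tau0 * INR n) < t * (2 * tau0 * K + 1)) by (unfold K; nra).
    assert (C : 0 < betabar * s) by nra.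
    assert (X2 : betabar * s * tau0 <= betabar * s * (t * (1 + tau0 * INR n))) by (apply Rmult_le_compat_l; lra).
    assert (X3 : betabar * s * (t * (1 + tau0 * INR n)) < betabar * s * (t * (2 * tau0 * K + 1))) by (apply Rmult_lt_compat_l; lra).
    assert (X4 : betabar * s * t * (2 * tau0 * K + 1) <= b2 * tau0 * (2 * tau0 * K + 1)) by (apply Rmult_le_compat_r; lra).
    nra.
  - apply div_lt_r; auto.
    assert (b2 * tau0 * K <= betabar * t * K) by nra. nra.
Qed.
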